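(* Let $X$ be a real Banach space with $\operatorname{dens} X = \kappa$. If $\operatorname{cf}(\kappa) \geq \mathfrak{c}^+$, then $X$ contains no overcomplete set.
   Context: $\operatorname{dens}$ denotes the density character, $\operatorname{cf}$ the cofinality, $\mathfrak{c}$ the cardinality of the continuum and $\mathfrak{c}^+$ its successor cardinal. A subset $S$ of a Banach space $X$ with $|S| = \operatorname{dens} X$ is called overcomplete if every subset $\Lambda \subseteq S$ with $|\Lambda| = |S|$ is linearly dense in $X$. *)

(* Defs.v *)
From HB Require Import structures.
From mathcomp Require Import all_boot all_order all_algebra.
From mathcomp Require Import all_classical all_reals all_analysis.
Set Implicit Arguments. Unset Strict Implicit. Unset Printing Implicit Defensive.
Import Order.TTheory GRing.Theory Num.Theory.
Local Open Scope classical_set_scope.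
Local Open Scope ring_scope.
Local Open Scope card_scope.

Definition has_dens_card (R : realType) (X : completeNormedModType R)
    {U : Type} (S : set U) : Prop :=
  (exists D : set X, dense D /\ (S #= D)) /\
  (forall D : set X, dense D -> S #<= D).

Definition lspan (R : realType) (X : completeNormedModType R) (L : set X) : set X :=
  [set x | exists (n : nat) (c : 'I_n -> R) (v : 'I_n -> X),
      (forall i, L (v i)) /\ x = \sum_(i < n) c i *: v i].

Definition linearly_dense (R : realType) (X : completeNormedModType R) (L : set X) :=
  closure (lspan L) = setT.

Definition overcomplete (R : realType) (X : completeNormedModType R) (S : set X) :=
  has_dens_card X S /\
  (forall L : set X, L `<=` S -> (L #= S) -> linearly_dense L).

(** [(W, lt)] is an initial ordinal (a cardinal, von Neumann style):
    a strict well-order every proper initial segment of which has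
    strictly smaller cardinality than [W]. *)
Definition initial_ordinal (W : Type) (lt : W -> W -> Prop) : Prop :=
  (forall x, ~ lt x x) /\
  (forall x y z, lt x y -> lt y z -> lt x z) /\
  (forall x y, lt x y \/ x = y \/ lt y x) /\
  well_founded lt /\
  (forall x : W, ~ ([set: W] #<= [set y | lt y x])).

Definition cofinal (W : Type) (lt : W -> W -> Prop) (C : set W) : Prop :=
  forall x : W, exists2 y, C y & (x = y \/ lt x y).

(** cf(κ) >= 𝔠^+ i.e. cf(κ) > 𝔠 : every cofinal subset of κ has
    cardinality strictly larger than |R| = 𝔠. *)
Definition cf_ge_c_succ (R : realType) (W : Type) (lt : W -> W -> Prop) : Prop :=
  forall C : set W, cofinal lt C -> ~ (C #<= [set: R]).

(* Main.v *)
Require Import Defs.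
From mathcomp Require Import all_boot all_order all_algebra.
From mathcomp Require Import all_classical all_reals all_analysis.
From mathcomp Require Import wochoice.
From mathcomp.algebra_tactics Require Import ring lra.
Set Implicit Arguments. Unset Strict Implicit. Unset Printing Implicit Defensive.
Import Order.TTheory GRing.Theory Num.Theory.
Local Open Scope classical_set_scope.
Local Open Scope card_scope.

Lemma cardle_of_fun T U (A : set T) (B : set U) (f : T -> U) :
  (forall x, A x -> B (f x)) ->
  (forall x y, A x -> A y -> f x = f y -> x = y) -> A #<= B.
Proof.
move=> fAB finj.
have [->|/eqP/set0P[a Aa]] := pselect (A = set0); first exact: card_ge0.
elim/Ppointed: U => U in B f fAB finj *.
  by case: (no (f a)).
apply/pcard_leP; apply/injfunPex; exists f.
  by move=> x Ax; exact: fAB.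
by move=> x y /set_mem Ax /set_mem Ay; exact: finj.
Qed.

Lemma fun_of_cardle T U (A : set T) (B : set U) (u0 : U) :
  A #<= B -> exists f : T -> U, (forall x, A x -> B (f x)) /\
  (forall x y, A x -> A y -> f x = f y -> x = y).
Proof.
elim/Ppointed: U => U in B u0 *; first by case: (no u0).
move=> /pcard_leP/injfunPex[f fAB finj]; exists f; split.
  by move=> x Ax; exact: fAB.
by move=> x y Ax Ay; apply: finj; rewrite inE.
Qed.

Lemma emb (P V : Type) (ltP : P -> P -> Prop) (A : set P) (B : set V) :
  well_founded ltP ->
  (forall p q, A p -> A q -> ltP p q \/ p = q \/ ltP q p) ->
  (forall p, A p -> ~ (B #<= A `&` [set q | ltP q p])) -> A #<= B.
Proof.
move=> wf tot H.
have [->|/eqP/set0P[a0 Aa0]] := pselect (A = set0); first exact: card_ge0.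
have [v0 Bv0] : exists v, B v.
  apply: contrapT => nB; apply: (H a0 Aa0).
  have -> : B = set0 by apply/seteqP; split => // v Bv; apply: nB; exists v.
  exact: card_ge0.
pose F (p : P) (rec : forall q, ltP q p -> V) : V :=
  match pselect (exists v, B v /\ forall q (h : ltP q p), A q -> rec q h <> v) with
  | left e => projT1 (cid e) | right _ => v0 end.
pose g := Fix wf (fun _ => V) F.
have geq p : g p = F p (fun q _ => g q).
  rewrite /g Fix_eq // => x f1 f2 e.
  have -> // : f1 = f2.
  apply: functional_extensionality_dep => y.
  apply: functional_extensionality_dep => h; exact: e.
have key p : A p -> B (g p) /\ forall q, A q -> ltP q p -> g q <> g p.
  move=> Ap; rewrite geq /F; case: pselect => [e|ne].
    case: cid => v [Bv hv] /=; split => // q Aq lqp; exact: hv.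
  exfalso; apply: (H p Ap).
  have hh : forall v, exists q, B v -> A q /\ ltP q p /\ g q = v.
    move=> v; have [Bv|nBv] := pselect (B v); last by exists a0.
    apply: contrapT => nq; apply: ne; exists v; split => // q h Aq gqv.
    by apply: nq; exists q.
  have [h hP] := choice hh.
  apply: (@cardle_of_fun _ _ _ _ h).
    by move=> v Bv; have [? [? _]] := hP v Bv.
  move=> v w Bv Bw e.
  have [_ [_ <-]] := hP v Bv; have [_ [_ <-]] := hP w Bw; by rewrite e.
apply: (@cardle_of_fun _ _ _ _ g); first by move=> x Ax; have [] := key x Ax.
move=> x y Ax Ay e.
have [lxy|[//|lyx]] := tot x y Ax Ay.
  by have [_ /(_ x Ax lxy)] := key y Ay.
by have [_ /(_ y Ay lyx)] := key x Ax; rewrite e.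
Qed.

Lemma prod_le T U T' U' (A : set T) (B : set U) (A' : set T') (B' : set U')
  (a0 : T') (b0 : U') :
  A #<= A' -> B #<= B' -> A `*` B #<= A' `*` B'.
Proof.
move=> /(fun_of_cardle a0)[f [fA fi]] /(fun_of_cardle b0)[g [gB gi]].
apply: (@cardle_of_fun _ _ _ _ (fun p => (f p.1, g p.2))).
  by move=> [x y] [/= Ax By]; split; [exact: fA|exact: gB].
move=> [x y] [x' y'] [/= Ax By] [/= Ax' By'] [] /fi-> // /gi-> //.
Qed.

Section Ord.
Variables (W : Type) (lt : W -> W -> Prop).
Hypothesis irr : forall x, ~ lt x x.
Hypothesis trans : forall x y z, lt x y -> lt y z -> lt x z.
Hypothesis tri : forall x y, lt x y \/ x = y \/ lt y x.
Hypothesis wf : well_founded lt.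
Hypothesis init : forall x : W, ~ ([set: W] #<= [set y | lt y x]).

Definition seg x := [set y | lt y x].
Definition cl x := [set y | y = x \/ lt y x].

Lemma bounded U (A : set U) : ~ ([set: W] #<= A) -> exists a, A #<= seg a.
Proof.
move=> nWA; apply: contrapT => nex; apply: nWA.
apply: (emb wf) => [p q _ _|p _]; first exact: tri.
by rewrite setTI => Ale; apply: nex; exists p.
Qed.

Lemma cl_le m : infinite_set (seg m) -> cl m #<= seg m.
Proof.
move=> /infiniteP /(fun_of_cardle m)[e [eS ei]].
have ei' : forall n n', e n = e n' -> n = n' by move=> n n' /ei; apply.
pose k x := match pselect (exists n, e n = x) with
  | left h => e (projT1 (cid h)).+1
  | right _ => if pselect (x = m) then e 0 else x end.
apply: (@cardle_of_fun _ _ _ _ k).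
  move=> x clx; rewrite /k; case: pselect => [h|nh]; first exact: eS.
  case: pselect => [xm|xm]; first exact: eS.
  by case: clx.
move=> x y _ _; rewrite /k.
case: (pselect (exists n, e n = x)) => [hx|nhx];
  case: (pselect (exists n, e n = y)) => [hy|nhy].
- case: (cid hx) => n /= en; case: (cid hy) => n' /= en' /ei' [nn'].
  by rewrite -en -en' nn'.
- case: (cid hx) => n /= en; case: (pselect (y = m)) => [ym|yn] /=.
    by move=> /ei'.
  by move=> ey; exfalso; apply: nhy; exists n.+1.
- case: (cid hy) => n /= en; case: (pselect (x = m)) => [xm|xn] /=.
    by move=> /ei'.
  by move=> ey; exfalso; apply: nhx; exists n.+1.
- case: (pselect (x = m)) => [xm|xn]; case: (pselect (y = m)) => [ym|yn] //=.
  + by rewrite xm ym.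
  + by move=> ey; exfalso; apply: nhy; exists 0%N.
  + by move=> ey; exfalso; apply: nhx; exists 0%N.
Qed.


Definition mx a b := if pselect (lt a b) then b else a.

Lemma mx_cl1 a b : cl (mx a b) a.
Proof. by rewrite /mx; case: pselect => h /=; [right|left]. Qed.

Lemma mx_cl2 a b : cl (mx a b) b.
Proof.
rewrite /mx; case: pselect => h /=; first by left.
by have [//|[->|lba]] := tri a b; [left|right].
Qed.

Lemma mx_lt a b d : lt a d -> lt b d -> lt (mx a b) d.
Proof. by rewrite /mx; case: pselect. Qed.

Lemma cl_trans x y z : cl y x -> cl z y -> cl z x.
Proof.
case=> [exy|lxy]; case=> [eyz|lyz].
- by left; rewrite exy.
- by right; rewrite exy.
- by right; rewrite -eyz.
- by right; exact: trans lxy lyz.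
Qed.

Definition ltG (p q : W * W) := lt (mx p.1 p.2) (mx q.1 q.2) \/
  (mx p.1 p.2 = mx q.1 q.2 /\ (lt p.1 q.1 \/ (p.1 = q.1 /\ lt p.2 q.2))).

Lemma wf_ltG : well_founded ltG.
Proof.
have H : forall m a b, mx a b = m -> Acc ltG (a, b).
  move=> m; elim/(well_founded_ind wf): m => m IHm a.
  elim/(well_founded_ind wf): a => a IHa b.
  elim/(well_founded_ind wf): b => b IHb e.
  constructor => -[c d] /= [lt1|[e1 [lt2|[e2 lt3]]]].
  - by rewrite e in lt1; exact: (IHm _ lt1 c d erefl).
  - by apply: (IHa c lt2 d); rewrite e1.
  - by move: e1 e2 lt3 => /= e1 e2 lt3; rewrite e2; apply: (IHb d lt3); rewrite -e2 e1.
by move=> [a b]; exact: (H _ a b erefl).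
Qed.

Lemma totG p q : ltG p q \/ p = q \/ ltG q p.
Proof.
case: p q => [a b] [c d]; rewrite /ltG /=.
have [h|[h|h]] := tri (mx a b) (mx c d); [by left; left|idtac|by right; right; left].
have [h1|[h1|h1]] := tri a c; [by left; right; split => //; left| idtac |
  by right; right; right; split => //; left].
have [h2|[h2|h2]] := tri b d; [by left; right; split => //; right|
  by right; left; rewrite h1 h2 |by right; right; right; split => //; right].
Qed.

Lemma predsG p q : ltG q p -> cl (mx p.1 p.2) q.1 /\ cl (mx p.1 p.2) q.2.
Proof.
move=> h; have hm : cl (mx p.1 p.2) (mx q.1 q.2).
  by case: h => [l|[e _]]; [right|left].
by split; apply: cl_trans hm; [exact: mx_cl1|exact: mx_cl2].
Qed.

Lemma hess d : infinite_set (seg d) -> seg d `*` seg d #<= seg d.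
Proof.
elim/(well_founded_ind wf): d => d IH infd.
have [[d' [ld' le]]|nle] := pselect (exists d', lt d' d /\ seg d #<= seg d').
  have infd' : infinite_set (seg d').
    by move=> fin; apply: infd; exact: card_le_finite le fin.
  have h1 : seg d `*` seg d #<= seg d' `*` seg d' := prod_le d d le le.
  have h2 := IH d' ld' infd'.
  have h3 : seg d' #<= seg d by apply: subset_card_le => y l; exact: trans l ld'.
  exact: card_le_trans (card_le_trans h1 h2) h3.
apply: (emb wf_ltG) => [p q _ _|p [Ap1 Ap2] le]; first exact: totG.
pose m := mx p.1 p.2.
have lm : lt m d by exact: mx_lt.
have le2 : seg d #<= cl m `*` cl m.
  apply: card_le_trans le (subset_card_le _) => q [_ lq].
  by have [? ?] := predsG lq; split.
have [fin|inf] := pselect (finite_set (cl m)).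
  by apply: infd; apply: card_le_finite le2 _; exact: finite_setX.
have infm : infinite_set (seg m).
  move=> fin; apply: inf; apply: (@sub_finite_set _ _ ([set m] `|` seg m)).
    by move=> y [->|l]; [left|right].
  by rewrite finite_setU; split => //; exact: finite_set1.
apply: nle; exists m; split => //.
have h1 : cl m `*` cl m #<= seg m `*` seg m := prod_le m m (cl_le infm) (cl_le infm).
exact: card_le_trans (card_le_trans le2 h1) (IH m lm infm).
Qed.


Lemma pigeon (U : Type) (psi : W -> U) :
  infinite_set [set: U] ->
  (forall C : set W, (forall x, exists2 y, C y & (x = y \/ lt x y)) ->
     ~ (C #<= [set: U])) ->
  exists r, [set: W] #<= psi @^-1` [set r].
Proof.
move=> infU cof; apply: contrapT => nex.
have hb : forall r, exists a, psi @^-1` [set r] #<= seg a.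
  by move=> r; apply: bounded => h; apply: nex; exists r.
have [al alP] := choice hb.
have [b hbnd] : exists b, forall r, lt (al r) b.
  apply: contrapT => nb; apply: (cof (range al)).
    move=> x; apply: contrapT => nx; apply: nb; exists x => r.
    have [l1|[e|l]] := tri (al r) x; first exact: l1.
      by exfalso; apply: nx; exists (al r) => //; left.
    by exfalso; apply: nx; exists (al r) => //; right.
  exact: card_image_le.
have nWU : ~ ([set: W] #<= [set: U]).
  by apply: cof => x; exists x => //; left.
have [g Ug] := bounded nWU.
pose d := mx b g.
have segcl z y : cl z y -> seg y `<=` seg z.
  by case=> [->//|lyz] w lw; exact: trans lw lyz.
have sbd : seg b `<=` seg d := segcl _ _ (mx_cl1 b g).
have sgd : seg g `<=` seg d := segcl _ _ (mx_cl2 b g).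
have fib : forall r, exists iota : W -> W, (forall x, psi x = r -> seg d (iota x)) /\
    (forall x y, psi x = r -> psi y = r -> iota x = iota y -> x = y).
  move=> r; have : psi @^-1` [set r] #<= seg d.
    apply: card_le_trans (alP r) (subset_card_le _) => y l.
    by apply: sbd; exact: trans l (hbnd r).
  by move=> /(fun_of_cardle b)[i [i1 i2]]; exists i; split => [x|x y]; [exact: i1|exact: i2].
have [io ioP] := choice fib.
have h1 : [set: W] #<= [set: U] `*` seg d.
  apply: (@cardle_of_fun _ _ _ _ (fun w => (psi w, io (psi w) w))).
    by move=> w _; split => //; have [+ _] := ioP (psi w); apply.
  move=> x y _ _ [e1 e2]; have [_ +] := ioP (psi x); apply => //.
  by rewrite e2 e1.
have Ud : [set: U] #<= seg d by apply: card_le_trans Ug (subset_card_le sgd).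
have infd : infinite_set (seg d) by move=> fin; apply: infU; exact: card_le_finite Ud fin.
have h2 : [set: U] `*` seg d #<= seg d `*` seg d := prod_le d d Ud (card_lexx _).
by exact: (init (card_le_trans (card_le_trans h1 h2) (hess infd))).
Qed.
End Ord.

Section HB.
Local Open Scope ring_scope.
Variables (R : realType) (X : normedModType R).

Definition good (G : set (X * R)) :=
  [/\ (forall p q a b, G p -> G q -> G (a *: p.1 + b *: q.1, a * p.2 + b * q.2)),
      (forall p q, G p -> G q -> p.1 = q.1 -> p.2 = q.2) &
      (forall p, G p -> p.2 <= `|p.1|)].

Lemma good_scale G p a : good G -> G p -> G (a *: p.1, a * p.2).
Proof.
case=> lin _ _ Gp; have := lin p p a 0 Gp Gp.
by rewrite scale0r mul0r !addr0.
Qed.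

Lemma hb (x0 : X) : x0 != 0 -> exists f : X -> R,
  [/\ (forall a b x y, f (a *: x + b *: y) = a * f x + b * f y),
      (forall x, `|f x| <= `|x|) & f x0 = `|x0|].
Proof.
move=> x0n0.
pose P G := good G /\ (G = set0 \/ G (x0, `|x0|)).
have [A [[gA Ax0] Amax]] : exists A, P A /\ forall B, A `<` B -> ~ P B.
  apply: Zorn_bigcup => F FP tot; split.
    split.
    - move=> p q a b [G1 FG1 G1p] [G2 FG2 G2q].
      have [s12|s21] := tot _ _ FG1 FG2.
        exists G2 => //; have [[lin _ _] _] := FP _ FG2; apply: lin => //; exact: s12.
      exists G1 => //; have [[lin _ _] _] := FP _ FG1; apply: lin => //; exact: s21.
    - move=> p q [G1 FG1 G1p] [G2 FG2 G2q].
      have [s12|s21] := tot _ _ FG1 FG2.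
        by have [[_ fn _] _] := FP _ FG2; apply: fn => //; exact: s12.
      by have [[_ fn _] _] := FP _ FG1; apply: fn => //; exact: s21.
    - by move=> p [G FG Gp]; have [[_ _ bd] _] := FP _ FG; exact: bd.
  have [[G FG Gx]|nG] := pselect (exists2 G, F G & G (x0, `|x0|)).
    by right; exists G.
  left; apply/seteqP; split => // p [G FG Gp].
  have [_ [G0|Gx]] := FP _ FG; first by rewrite G0 in Gp.
  by exfalso; apply: nG; exists G.
have Ax : A (x0, `|x0|).
  case: Ax0 => [A0|//]; exfalso.
  pose G0 := [set p : X * R | exists l, p = (l *: x0, l * `|x0|)].
  apply: (Amax G0).
    rewrite A0; split => //; move=> /(_ (x0, `|x0|)) h.
    by have := h (ex_intro _ 1 _); rewrite scale1r mul1r => /(_ erefl).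
  split; last by right; exists 1; rewrite scale1r mul1r.
  split.
  - move=> p q a b [l ->] [m ->] /=; exists (a * l + b * m).
    by rewrite scalerDl !scalerA mulrDl !mulrA.
  - move=> p q [l ->] [m ->] /= e.
    have : (l - m) *: x0 = 0 by rewrite scalerBl e subrr.
    move/eqP; rewrite scaler_eq0 (negbTE x0n0) orbF subr_eq0 => /eqP->.
    by [].
  - move=> p [l ->] /=; rewrite normrZ ler_wpM2r //; exact: ler_norm.
case: gA => Alin Afun Abnd.
have A00 : A (0, 0).
  by have := Alin _ _ 0 0 Ax Ax; rewrite !scale0r !mul0r !addr0.
have dom : forall y, exists t, A (y, t).
  move=> y; apply: contrapT => nd.
  pose E := [set u | exists2 p, A p & u = p.2 - `|p.1 - y|].
  have ub p q : A p -> A q -> p.2 - `|p.1 - y| <= `|q.1 + y| - q.2.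
    move=> Ap Aq; have := Abnd _ (Alin p q 1 1 Ap Aq).
    rewrite /= !scale1r !mul1r => h.
    have : `|p.1 + q.1| <= `|p.1 - y| + `|q.1 + y|.
      by rewrite -[X in `|X|](_ : (p.1 - y) + (q.1 + y) = _) ?ler_normD //; rewrite addrACA addNr addr0.
    lra.
  pose c := sup E.
  have hsE : has_sup E.
    split; first by exists (0 - `|0 - y|); exists (0, 0).
    by exists (`|0 + y| - 0) => u [p Ap ->]; exact: (ub p (0, 0) Ap A00).
  have cE p : A p -> p.2 - `|p.1 - y| <= c.
    by move=> Ap; apply: sup_upper_bound => //; exists p.
  have Ec q : A q -> c <= `|q.1 + y| - q.2.
    by move=> Aq; apply: ge_sup; [case: hsE|move=> u [p Ap ->]; exact: (ub p q Ap Aq)].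
  pose A' := [set r | exists p l, A p /\ r = (p.1 + l *: y, p.2 + l * c)].
  have AA' : A `<=` A'.
    by move=> [a b] Ar; exists (a, b), 0; rewrite scale0r mul0r !addr0.
  apply: (Amax A').
    split => // sA; apply: nd; exists c; apply: sA.
    by exists (0, 0), 1; rewrite /= scale1r mul1r !add0r.
  split; last by right; exact: AA'.
  split.
  - move=> p' q' a b [p [l [Ap ->]]] [q [m [Aq ->]]] /=.
    exists (a *: p.1 + b *: q.1, a * p.2 + b * q.2), (a * l + b * m); split.
      exact: Alin.
    congr (_, _) => /=; last by ring.
    rewrite /= !scalerDr !scalerDl !scalerA.
    by rewrite -!addrA; congr (_ + _); rewrite addrCA.
  - move=> p' q' [p [l [Ap ->]]] [q [m [Aq ->]]] /= e.
    have [lm|nlm] := eqVneq l m.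
      rewrite lm in e *; move/addIr: e => e.
      by rewrite (Afun _ _ Ap Aq e).
    exfalso; apply: nd.
    have lm0 : l - m != 0 by rewrite subr_eq0.
    exists ((l - m)^-1 * q.2 + (- (l - m)^-1) * p.2).
    have -> : y = (l - m)^-1 *: q.1 + (- (l - m)^-1) *: p.1.
      have e2 : (l - m) *: y = q.1 - p.1.
        apply: (@addIr _ (m *: y)); rewrite scalerBl subrK.
        apply: (@addrI _ p.1); rewrite e.
        by rewrite addrA [p.1 + _]addrC subrK.
      by rewrite scaleNr -scalerBr -e2 scalerA mulVf // scale1r.
    exact: Alin.
  - move=> p' [p [l [Ap ->]]] /=.
    have [->|l0] := eqVneq l 0; first by rewrite scale0r mul0r !addr0; exact: Abnd.
    pose q1 := l^-1 *: p.1; pose q2 := l^-1 * p.2.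
    have Aq : A (q1, q2) := good_scale (l^-1) (And3 Alin Afun Abnd) Ap.
    have Anq : A (- q1, - q2).
      have := good_scale (-1) (And3 Alin Afun Abnd) Aq.
      by rewrite /= scaleN1r mulN1r.
    have e1 : p.1 = l *: q1 by rewrite /q1 scalerA mulfV // scale1r.
    have e2 : p.2 = l * q2 by rewrite /q2 mulrA mulfV // mul1r.
    rewrite e1 e2 -[l *: q1 + l *: y]scalerDr normrZ.
    have h1 := Ec _ Aq; have h2 := cE _ Anq; move: h1 h2 => /=.
    rewrite -[- q1 - y]opprD normrN.
    have [lp|ln] := ltrP 0 l.
      rewrite gtr0_norm //; nra.
    rewrite ler0_norm //; nra.
have [f fP] := choice dom.
exists f; split.
- move=> a b x y; have := Alin _ _ a b (fP x) (fP y) => /= h.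
  exact: (Afun _ _ (fP _) h).
- move=> x; rewrite ler_norml; apply/andP; split; last exact: (Abnd _ (fP x)).
  have := Abnd _ (good_scale (-1) (And3 Alin Afun Abnd) (fP x)).
  by rewrite /= scaleN1r mulN1r normrN lerNl.
- exact: (Afun _ _ (fP x0) Ax).
Qed.
End HB.

Section Ker.
Local Open Scope ring_scope.
Variables (R : realType) (X : completeNormedModType R).

Lemma ker_closure (h : X -> R) (K : R) (L : set X) :
  (forall a b x y, h (a *: x + b *: y) = a * h x + b * h y) ->
  (forall x, `|h x| <= K * `|x|) -> (forall s, L s -> h s = 0) ->
  forall x, closure (lspan L) x -> h x = 0.
Proof.
move=> hl hb hL.
have h0 : h 0 = 0.
  by have := hl 0 0 0 0; rewrite !scale0r addr0 !mul0r addr0.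
have hsp : forall x, lspan L x -> h x = 0.
  move=> x [n [c [v [Lv ->]]]]; elim: n c v Lv => [|n IH] c v Lv.
    by rewrite big_ord0.
  rewrite big_ord_recr /=.
  have := IH (fun i => c (widen_ord (leqnSn n) i)) (fun i => v (widen_ord (leqnSn n) i)) (fun i => Lv _) => /= e.
  by rewrite -[X in h (X + _)]scale1r hl e (hL _ (Lv _)) !mulr0 addr0.
move=> x clx; apply: contrapT => hx0.
pose K' := `|K| + 1.
have K'0 : 0 < K' by rewrite /K'; have := normr_ge0 K; lra.
have hb' y : `|h y| <= K' * `|y|.
  apply: le_trans (hb y) _; apply: ler_wpM2r => //.
  by have := ler_norm K; rewrite /K'; lra.
have hxp : 0 < `|h x| by rewrite normr_gt0; apply/eqP.
pose e := `|h x| / K'.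
have epos : 0 < e by rewrite /e divr_gt0.
have Ke : K' * e = `|h x| by rewrite /e mulrC divfK // gt_eqF.
have [z [lz bz]] := clx (ball x e) (nbhsx_ballx x e epos).
move: bz; rewrite -ball_normE /ball_ /= => bz.
have hxz : h (x - z) = h x.
  have -> : x - z = 1 *: x + (-1) *: z by rewrite scale1r scaleN1r.
  by rewrite hl (hsp _ lz) mulr0 addr0 mul1r.
have := hb' (x - z); rewrite hxz => hh.
nra.
Qed.
End Ker.

Local Open Scope ring_scope.

Theorem theorem3p9 (R : realType) (X : completeNormedModType R)
    (W : Type) (lt : W -> W -> Prop) :
  initial_ordinal lt ->
  has_dens_card X [set: W] ->
  cf_ge_c_succ R lt ->
  ~ (exists S : set X, overcomplete S).
Proof.
move=> [irr [trans [tri [wf init]]]] [[DW [dDW WD]] Wle] cf [S [[[DS [dDS SD]] Sle] ovc]].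
have cofT : forall C : set W, cofinal lt C -> ~ (C #<= [set: R]) := cf.
have nWR : ~ ([set: W] #<= [set: R]).
  by apply: cf => x; exists x => //; left.
have [w0 _] : exists w : W, True.
  apply: contrapT => nw; apply: nWR.
  have -> : [set: W] = set0 by apply/seteqP; split => // w _; apply: nw; exists w.
  exact: card_ge0.
have denseT : dense [set: X].
  by move=> O O0 _; rewrite setIT.
have WX : [set: W] #<= [set: X] := Wle _ denseT.
have WS : [set: W] #<= S.
  have /card_eqPle [_ DSS] := SD.
  exact: card_le_trans (Wle _ dDS) DSS.
have SW : S #<= [set: W].
  have /card_eqPle [_ DWW] := WD.
  exact: card_le_trans (Sle _ dDW) DWW.
have noinj : forall F : X -> R, ~ (forall x y, F x = F y -> x = y).
  move=> F Fi; apply: nWR; apply: card_le_trans WX _.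
  by apply: (@cardle_of_fun _ _ _ _ F) => // x y _ _; exact: Fi.
have [x0 x0n0] : exists x0 : X, x0 != 0.
  apply: contrapT => nx; apply: (noinj (fun _ => 0%R)) => x y _.
  have e (z : X) : z = 0 by apply: contrapT => nz; apply: nx; exists z; apply/eqP.
  by rewrite (e x) (e y).
have [f [fl fb fx0]] := hb x0n0.
have [y0 [y0n0 fy0]] : exists y0 : X, y0 != 0 /\ f y0 = 0.
  apply: contrapT => ny; apply: (noinj f) => x y fxy.
  apply/eqP; rewrite -subr_eq0; apply/negPn/negP => nz; apply: ny.
  exists (x - y); split => //.
  have -> : x - y = 1 *: x + (-1) *: y by rewrite scale1r scaleN1r.
  by rewrite fl fxy; ring.
have [g [gl gb gy0]] := hb y0n0.
have [e [eS ei]] := fun_of_cardle x0 WS.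
have infR : infinite_set [set: R].
  apply/infiniteP; apply: (@cardle_of_fun _ _ _ _ (fun n : nat => n%:R)) => // n m _ _.
  by move/eqP; rewrite eqr_nat => /eqP.
have [a Wa] := pigeon trans tri wf init (fun w => f (e w)) infR cf.
have [e1 [e1F e1i]] := fun_of_cardle w0 Wa.
have [b Wb] := pigeon trans tri wf init (fun w => g (e (e1 w))) infR cf.
pose Lam := (fun w => e (e1 w)) @` ((fun w => g (e (e1 w))) @^-1` [set b]).
have LS : Lam `<=` S by move=> _ [w _ <-]; exact: eS.
have WL : [set: W] #<= Lam.
  have inj : {in (fun w => g (e (e1 w))) @^-1` [set b] &, injective (fun w => e (e1 w))}.
    move=> x y _ _ /ei exy; apply: e1i => //; exact: exy.
  have /card_eqPle [_ +] := inj_card_eq inj.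
  exact: card_le_trans Wb.
have LeqS : Lam #= S.
  by apply: Cantor_Bernstein; [exact: subset_card_le|exact: card_le_trans SW WL].
have Lfg : forall s, Lam s -> f s = a /\ g s = b.
  by move=> _ [w gw <-]; split => //; exact: e1F.
have ld := ovc Lam LS LeqS.
have [h [K [hl hbd hL [z hz]]]] : exists (h : X -> R) (K : R),
    [/\ (forall a b x y, h (a *: x + b *: y) = a * h x + b * h y),
      (forall x, `|h x| <= K * `|x|), (forall s, Lam s -> h s = 0) &
      exists z, h z <> 0].
  have [a0|an0] := eqVneq a 0.
    exists f, 1; split => //.
    - by move=> x; rewrite mul1r.
    - by move=> s /Lfg[-> _].
    - by exists x0; rewrite fx0; apply/eqP; rewrite normr_eq0.
  exists (fun x => b * f x - a * g x), (`|b| + `|a|); split.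
  - by move=> a' b' x y; rewrite fl gl; ring.
  - move=> x; apply: le_trans (ler_normB _ _) _.
    rewrite !normrM mulrDl; apply: lerD; apply: ler_wpM2l => //.
  - by move=> s /Lfg[-> ->]; ring.
  - exists y0; apply/eqP.
    by rewrite fy0 gy0 mulr0 sub0r oppr_eq0 mulf_eq0 negb_or an0 normr_eq0 y0n0.
apply: hz; apply: (ker_closure hl hbd hL).
by rewrite ld.
Qed.
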